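(* Let $G$ be a Whitney-maximum graph in $\mathcal{C}_{n,m}$. Then: (a) for every $k\in\{1,\ldots,n\}$, $G$ is $k$-uniformly most reliable, i.e. $R_G^{(k)}(p)\ge R_H^{(k)}(p)$ for all $H\in\mathcal{C}_{n,m}$ and all $p\in[0,1]$; (b) for every $k\in\{1,\ldots,n-1\}$, $\lambda^{(k)}(G)\ge\lambda^{(k)}(H)$ for all $H\in\mathcal{C}_{n,m}$; (c) for every $k\in\{1,\ldots,n\}$, $t_k(G)\ge t_k(H)$ for all $H\in\mathcal{C}_{n,m}$.
   Context: $\mathcal{C}_{n,m}$ denotes the set of all connected simple graphs on $n$ vertices and $m$ edges. For a graph $G$ with vertex set $V$, $\kappa(G)$ is its number of connected components, $r(G)=|V|-\kappa(G)$, $c(G)=|E(G)|-|V|+\kappa(G)$. $\mathcal{S}(G)$ is the set of all spanning subgraphs of $G$. The Whitney polynomial is $W_G(x,y)=\sum_{H\in\mathcal{S}(G)}x^{r(G)-r(H)}y^{c(H)}$. A bivariate polynomial is nonnegative if all its coefficients are nonnegative real numbers. $G\in\mathcal{C}_{n,m}$ is Whitney-maximum if for every $H\in\mathcal{C}_{n,m}$ there is a nonnegative polynomial $Q_H$ with $W_G(x,y)-W_H(x,y)=(1-xy)Q_H(x,y)$. $N_i^{(k)}(G)$ is the number of spanning subgraphs of $G$ with exactly $i$ edges and at most $k$ connected components. The $k$-reliability $R_G^{(k)}(p)=\sum_{i=0}^m N_i^{(k)}(G)p^i(1-p)^{m-i}$ is the probability that $G$ has at most $k$ connected components when each edge is independently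 retained with probability $p$. The $k$-order edge connectivity $\lambda^{(k)}(G)$ is the minimum number of edges whose removal from $G$ yields a spanning subgraph with more than $k$ connected components. $t_k(G)$ is the number of spanning forests of $G$ consisting of exactly $k$ trees. *)

(* Defs.v *)
From HB Require Import structures.
From mathcomp Require Import all_boot all_order all_algebra.
From mathcomp Require Import reals.
Set Implicit Arguments. Unset Strict Implicit. Unset Printing Implicit Defensive.
Import Order.TTheory GRing.Theory Num.Theory.

Local Open Scope ring_scope.
Section Graphs.
Variable n : nat.
Implicit Types (E F : {set {set 'I_n}}).

Definition simple_graph E : bool := [forall e in E, #|e| == 2%N].

Definition adj F : rel 'I_n := fun x y => (x != y) && ([set x; y] \in F).

Definition kappa F : nat :=
  #|[set [set y | connect (adj F) x y] | x in 'I_n]|.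

Definition connectedb E : bool := [forall x, forall y, connect (adj E) x y].

Definition rank F : nat := n - kappa F.
Definition corank F : nat := #|F| + kappa F - n.

Definition inC (m : nat) E : bool := [&& simple_graph E, (#|E| == m)%N & connectedb E].

(* Whitney polynomial as an element of R[x][y]: x = 'X%:P, y = 'X *)
Definition whitney (R : nzRingType) E : {poly {poly R}} :=
  \sum_(F in powerset E) (('X%:P) ^+ (rank E - rank F) * 'X ^+ (corank F)).

Definition nonneg_bipoly (R : realDomainType) (Q : {poly {poly R}}) : Prop :=
  forall i j, 0 <= (Q`_i)`_j.

Definition whitney_max (R : realDomainType) (m : nat) G : Prop :=
  forall H, inC m H -> exists Q : {poly {poly R}},
    nonneg_bipoly Q /\ whitney R G - whitney R H = (1 - ('X%:P) * 'X) * Q.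

Definition Nik (i k : nat) E : nat :=
  #|[set F in powerset E | (#|F| == i)%N && (kappa F <= k)%N]|.

Definition kreliab (R : nzRingType) (k : nat) E (p : R) : R :=
  \sum_(i < #|E|.+1) (Nik i k E)%:R * p ^+ i * (1 - p) ^+ (#|E| - i).

Definition lambdak (k : nat) E : nat :=
  \big[minn/#|E|]_(F in powerset E | (k < kappa (E :\: F))%N) #|F|.

Definition has_cycle F : bool :=
  [exists l : 'I_n.+1, (2 < l)%N &&
     [exists t : l.-tuple 'I_n, uniq t && cycle (adj F) t]].

Definition forestb F : bool := ~~ has_cycle F.

Definition tk (k : nat) E : nat :=
  #|[set F in powerset E | forestb F && (kappa F == k)%N]|.

End Graphs.

(* Main.v *)
Require Import Defs.
From HB Require Import structures.
From mathcomp Require Import all_boot all_order all_algebra.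
From mathcomp Require Import reals.
From mathcomp Require Import zify.
Import Order.TTheory GRing.Theory Num.Theory.

Module Aux.
Set Implicit Arguments. Unset Strict Implicit. Unset Printing Implicit Defensive.

Section G.
Variable n : nat.
Implicit Types (F : {set {set 'I_n}}).

Definition cl F (x : 'I_n) := [set y | connect (adj F) x y].

Lemma kappaE F : kappa F = #|[set cl F x | x in 'I_n]|.
Proof. by []. Qed.

Lemma adj_sym F : symmetric (adj F).
Proof. by move=> x y; rewrite /adj eq_sym setUC. Qed.

Lemma csym F : connect_sym (adj F).
Proof. exact: sym_connect_sym (adj_sym F). Qed.

Lemma cl_eq F x y : (cl F x == cl F y) = connect (adj F) x y.
Proof.
apply/eqP/idP => [e|c].
  have : y \in cl F y by rewrite inE connect0.
  by rewrite -e inE.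
apply/setP => z; rewrite !inE; apply/idP/idP => h.
  by apply: connect_trans h; rewrite csym.
exact: connect_trans c h.
Qed.

Lemma adj_mono F F' : F \subset F' -> subrel (adj F) (adj F').
Proof. by move=> s x y /andP[a b]; rewrite /adj a (subsetP s). Qed.

Lemma connect_mono F F' x y : F \subset F' -> connect (adj F) x y -> connect (adj F') x y.
Proof. move=> s; apply: connect_sub => a b h; apply: connect1; exact: adj_mono h. Qed.

Lemma set2_eq (a b u v : 'I_n) : a != b -> [set a; b] = [set u; v] ->
  (a = u /\ b = v) \/ (a = v /\ b = u).
Proof.
move=> ab e.
have ha : a \in [set u; v] by rewrite -e !inE eqxx.
have hb : b \in [set u; v] by rewrite -e !inE eqxx orbT.
have hu : u \in [set a; b] by rewrite e !inE eqxx.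
move: ha hb hu; rewrite !inE => /orP[]/eqP ha /orP[]/eqP hb /orP[]/eqP hu; subst;
  try by [left|right]; by rewrite eqxx in ab.
Qed.

Lemma step_add F (u v x c z : 'I_n) :
  let P c := [|| connect (adj F) x c,
      connect (adj F) x u && connect (adj F) v c |
      connect (adj F) x v && connect (adj F) u c] in
  P c -> adj ([set u; v] |: F) c z -> P z.
Proof.
move=> P hc /andP[cz]; rewrite in_setU => /orP[/set1P e|hF].
  have cs := csym F.
  case: (set2_eq cz e) => [[? ?]|[? ?]]; subst c z; rewrite /P.
  - case/or3P: hc => [h|/andP[h1 h2]|/andP[h1 h2]].
    + by rewrite h connect0 /= orbT.
    + by rewrite (connect_trans h1) // cs.
    + by rewrite h1.
  - case/or3P: hc => [h|/andP[h1 h2]|/andP[h1 h2]].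
    + by rewrite h connect0 /= !orbT.
    + by rewrite h1.
    + by rewrite (connect_trans h1) // cs.
have e1 : connect (adj F) c z by apply: connect1; rewrite /adj cz hF.
rewrite /P.
case/or3P: hc => [h|/andP[h1 h2]|/andP[h1 h2]].
- by rewrite (connect_trans h e1).
- by rewrite h1 (connect_trans h2 e1) orbT.
- by rewrite h1 (connect_trans h2 e1) !orbT.
Qed.

Lemma path_add F (u v x : 'I_n) p : forall c,
  [|| connect (adj F) x c,
      connect (adj F) x u && connect (adj F) v c |
      connect (adj F) x v && connect (adj F) u c] ->
  path (adj ([set u; v] |: F)) c p ->
  [|| connect (adj F) x (last c p),
      connect (adj F) x u && connect (adj F) v (last c p) |
      connect (adj F) x v && connect (adj F) u (last c p)].
Proof.
elim: p => [|z p IH] c //= h /andP[a pp].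
apply: IH => //. exact: (step_add h a).
Qed.

Lemma connect_add F (u v : 'I_n) x y :
  connect (adj ([set u; v] |: F)) x y ->
  [|| connect (adj F) x y,
      connect (adj F) x u && connect (adj F) v y |
      connect (adj F) x v && connect (adj F) u y].
Proof.
move=> /connectP[p pp ->] {y}.
by apply: path_add pp; rewrite connect0.
Qed.
Lemma kappa_add F (u v : 'I_n) : u != v ->
  kappa F = kappa ([set u; v] |: F) + ~~ connect (adj F) u v.
Proof.
move=> uv; set F' := [set u; v] |: F.
have sF : F \subset F' by apply: subsetUr.
have cs := csym F.
have e' : connect (adj F') u v.
  by apply: connect1; rewrite /adj uv !inE eqxx.
case: (boolP (connect (adj F) u v)) => cuv /=.
  suff E : cl F =1 cl F' by rewrite addn0 !kappaE (eq_imset _ E).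
  move=> x; apply/setP => z; rewrite !inE; apply/idP/idP => [|h]; first exact: connect_mono.
  case/or3P: (connect_add h) => [//|/andP[h1 h2]|/andP[h1 h2]].
    by rewrite (connect_trans h1) // (connect_trans cuv).
  by rewrite (connect_trans h1) // (connect_trans _ h2) // cs.
pose h (C : {set 'I_n}) := if [pick z in C] is Some z then cl F' z else set0.
have hcl : forall x, h (cl F x) = cl F' x.
  move=> x; rewrite /h; case: pickP => [z zin|none].
    apply/eqP; rewrite cl_eq csym; apply: connect_mono sF _.
    by move: zin; rewrite inE.
  by move: (none x); rewrite inE connect0.
have -> : kappa F' = #|[set h C | C in [set cl F x | x in 'I_n]]|.
  suff E : [set cl F' x | x in 'I_n] = [set h C | C in [set cl F x | x in 'I_n]] by rewrite kappaE E.
  apply/setP => C; apply/imsetP/imsetP.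
    by case=> x _ ->; exists (cl F x); rewrite ?imset_f ?hcl.
  by case=> _ /imsetP[x _ ->] ->; exists x; rewrite ?hcl.
set S := [set cl F x | x in 'I_n].
have uS : cl F u \in S by apply: imset_f.
have vS : cl F v \in S :\ cl F u.
  by rewrite !inE imset_f // andbT cl_eq cs.
have -> : [set h C | C in S] = [set h C | C in S :\ cl F u].
  apply/eqP; rewrite eqEsubset; apply/andP; split; last exact: imsetS (subsetDl _ _).
  apply/subsetP => _ /imsetP[C CS ->].
  case: (eqVneq C (cl F u)) => [->|ne]; last by apply: imset_f; rewrite !inE ne.
  have -> : h (cl F u) = h (cl F v).
    by rewrite !hcl; apply/eqP; rewrite cl_eq.
  exact: imset_f.
rewrite kappaE -/S (cardsD1 (cl F u) S) uS addnC; congr (_ + _); apply/esym.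
apply/eqP; apply/imset_injP => C1 C2 /setD1P[nx /imsetP[x _ E1]] /setD1P[ny /imsetP[y _ E2]]; subst C1 C2.
rewrite !hcl => /eqP; rewrite cl_eq => c'.
apply/eqP; rewrite cl_eq.
case/or3P: (connect_add c') => [//|/andP[h1 h2]|/andP[h1 h2]].
  by move: nx; rewrite cl_eq h1.
by move: ny; rewrite eq_sym cl_eq h2.
Qed.

Lemma kappa0 : kappa (set0 : {set {set 'I_n}}) = n.
Proof.
have E : forall x, cl set0 x = [set x].
  move=> x; apply/setP => y; rewrite !inE; apply/idP/idP => [/connectP[[|z p] /=]|/eqP->].
  - by move=> _ ->.
  - by rewrite /adj inE andbF.
  - exact: connect0.
rewrite kappaE (eq_imset _ E) card_imset ?card_ord //; exact: set1_inj.
Qed.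

Lemma kappa_le F : (kappa F <= n)%N.
Proof. by rewrite kappaE; apply: leq_trans (leq_imset_card _ _) _; rewrite card_ord. Qed.

Lemma kappa_gt0 F : (0 < n)%N -> (0 < kappa F)%N.
Proof.
move=> n0; rewrite kappaE card_gt0; apply/set0Pn.
by exists (cl F (Ordinal n0)); apply: imset_f.
Qed.

Lemma simple_sub F F' : F \subset F' -> simple_graph F' -> simple_graph F.
Proof.
move=> s /forall_inP h; apply/forall_inP => e eF; apply: h; exact: (subsetP s).
Qed.

Lemma simple_edge F e : simple_graph F -> e \in F ->
  exists u v, [/\ u != v, e = [set u; v] & [set u; v] |: (F :\ e) = F].
Proof.
move=> /forall_inP h eF; case/cards2P: (h e eF) => u [v [uv ee]].
by exists u, v; split => //; rewrite -ee setD1K.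
Qed.

Lemma kappa_ge F : simple_graph F -> (n <= #|F| + kappa F)%N.
Proof.
have [N] := ubnP #|F|; elim: N F => [//|N IH] F cF sF.
case: (eqVneq F set0) => [->|]; first by rewrite kappa0 cards0.
case/set0Pn => e eF.
case: (simple_edge sF eF) => u [v [uv ee EF]].
have sF0 : simple_graph (F :\ e) by apply: simple_sub sF; apply: subsetDl.
have cF0 : (#|F :\ e| < N)%N by move: cF; rewrite (cardsD1 e F) eF.
have := IH _ cF0 sF0.
rewrite (cardsD1 e F) eF (kappa_add (F :\ e) uv) EF.
case: (~~ _) => /=; lia.
Qed.

Lemma kappa_conn (E : {set {set 'I_n}}) : connectedb E -> (0 < n)%N -> kappa E = 1%N.
Proof.
move=> /forallP h n0.
have E1 : forall x, cl E x = setT.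
  by move=> x; apply/setP => y; rewrite !inE; move/forallP: (h x) => /(_ y).
rewrite kappaE (eq_imset _ E1).
have -> : [set setT | _ in 'I_n] = [set setT] :> {set {set 'I_n}}.
  apply/setP => C; rewrite inE; apply/imsetP/eqP => [[x _ ->] //|->].
  by exists (Ordinal n0).
exact: cards1.
Qed.

Lemma has_cycle_mono F F' : F \subset F' -> has_cycle F -> has_cycle F'.
Proof.
move=> s /existsP[l /andP[l2 /existsP[t /andP[ut ct]]]].
apply/existsP; exists l; rewrite l2 /=; apply/existsP; exists t.
by rewrite ut /=; apply: sub_cycle ct; apply: adj_mono.
Qed.

Lemma cycle_edge F : has_cycle F -> exists x y, [/\ x != y, [set x; y] \in F &
   connect (adj (F :\ [set x; y])) x y].
Proof.
case/existsP => l /andP[l2 /existsP[t /andP[ut ct]]].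
have st := size_tuple t.
move: ut ct st; case: (tval t) => [|x [|y [|z q']]]; try by move=> _ _ l0; rewrite -l0 in l2.
set q := z :: q'.
move=> ut ct _.
have [axy pq] : adj F x y /\ path (adj F) y (rcons q x) by apply/andP; exact: ct.
have xy : x != y by case/andP: axy.
have eF : [set x; y] \in F by case/andP: axy.
exists x, y; split => //.
have xq : x \notin y :: q by case/andP: ut.
have yq : y \notin q by case/andP: ut => _ /andP[].
rewrite csym; apply/connectP; exists (rcons q x); last by rewrite last_rcons.
rewrite rcons_path -/q; rewrite rcons_path in pq; case/andP: pq => pq al.
apply/andP; split.
  apply: (@sub_in_path _ [pred w | w != x] (adj F)) pq.
    move=> a b; rewrite !inE => ax bx /andP[ab abF].
    rewrite /adj ab !inE abF andbT; apply/eqP => E.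
    have : x \in [set a; b] by rewrite E !inE eqxx.
    by rewrite !inE => /orP[]/eqP xe; [rewrite xe eqxx in ax | rewrite xe eqxx in bx].
  apply/allP => w wq /=; apply/eqP => wx.
  by move: xq; rewrite -wx wq.
move: al; rewrite /adj => /andP[lx lF]; rewrite lx !inE lF andbT /=.
apply/eqP => E; case: (set2_eq lx E) => [[l1 _]|[l1 _]].
  by rewrite l1 eqxx in lx.
have : last y q \in q by rewrite /q /= mem_last.
by rewrite l1 (negbTE yq).
Qed.
Lemma mk_cycle F (u v : 'I_n) : u != v -> [set u; v] \in F ->
  connect (adj (F :\ [set u; v])) u v -> has_cycle F.
Proof.
move=> uv eF /connectP[p pp lp].
move: lp; case: (shortenP pp) => p' pp' up' _ lp {pp}.
have sub : subrel (adj (F :\ [set u; v])) (adj F) by apply: adj_mono; apply: subsetDl.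
case: p' pp' up' lp => [|w [|z q]] /=.
- by move=> _ _ e; rewrite e eqxx in uv.
- move=> + _ e; rewrite -e /adj !inE eqxx andbT.
  by case/and3P.
move=> pp0 up lv.
have pp : path (adj (F :\ [set u; v])) u [:: w, z & q] := pp0.
have ut : uniq (u :: w :: z :: q) by [].
have sz : (size (u :: w :: z :: q) < n.+1)%N.
  by rewrite ltnS -(card_uniqP ut); apply: leq_trans (max_card _) _; rewrite card_ord.
apply/existsP; exists (Ordinal sz); apply/andP; split; first by [].
apply/existsP; exists (in_tuple (u :: w :: z :: q)); rewrite ut andTb.
change (path (adj F) u (rcons [:: w, z & q] u)).
rewrite rcons_path; apply/andP; split; first exact (sub_path sub pp).
rewrite /= -lv /adj eq_sym uv /= setUC; exact: eF.
Qed.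

Lemma forest_char F : simple_graph F -> forestb F = (#|F| + kappa F == n).
Proof.
move=> sF; apply/idP/idP; last first.
  apply: contraLR; rewrite /forestb negbK => /cycle_edge[x [y [xy eF c]]].
  have := kappa_add (F :\ [set x; y]) xy; rewrite c /= addn0 setD1K // => <-.
  have h : (n <= #|F :\ [set x; y]| + kappa (F :\ [set x; y]))%N.
    by apply: kappa_ge; apply: simple_sub sF; apply: subsetDl.
  rewrite (cardsD1 [set x; y] F) eF /= add1n; apply/eqP; move: h; set a := #|_|; set b := kappa _; lia.
have [N] := ubnP #|F|; elim: N F sF => [//|N IH] F sF cF fF.
case: (eqVneq F set0) => [->|]; first by rewrite kappa0 cards0.
case/set0Pn => e eF.
case: (simple_edge sF eF) => u [v [uv ee EF]].
have sF0 : simple_graph (F :\ e) by apply: simple_sub sF; apply: subsetDl.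
have cF0 : (#|F :\ e| < N)%N by move: cF; rewrite (cardsD1 e F) eF.
have fF0 : forestb (F :\ e).
  by apply: contra fF; apply: has_cycle_mono; apply: subsetDl.
have := IH _ sF0 cF0 fF0.
rewrite (cardsD1 e F) eF (kappa_add (F :\ e) uv) EF.
case: (boolP (connect _ u v)) => [c|_ /=]; last by lia.
have c' : connect (adj (F :\ [set u; v])) u v by rewrite -ee.
by move: fF; rewrite /forestb (mk_cycle uv _ c') // -ee.
Qed.
End G.

Local Open Scope ring_scope.

Section P.
Variable R : realDomainType.

Definition mono (a b : nat) : {poly {poly R}} := ('X%:P) ^+ a * 'X ^+ b.
Definition Ssum (M : nat) : {poly {poly R}} := \sum_(s < M.+1) mono s s.

Lemma coef_mono a b j i : ((mono a b)`_j)`_i = ((j == b) && (i == a))%:R.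
Proof.
rewrite /mono -rmorphXn /= coefCM coefXn.
case: (j == b); rewrite ?mulr1 ?mulr0 ?coef0 ?coefXn //.
Qed.

Lemma monoM a b c d : mono a b * mono c d = mono (a + c) (b + d).
Proof. by rewrite /mono mulrACA -!exprD. Qed.

Lemma ind_sum (M a b i j : nat) : (j <= M)%N ->
  \sum_(s < M.+1) ((j == b + s) && (i == a + s))%N%:R =
  ((a <= i) && (b <= j) && (i - a == j - b))%N%:R :> R.
Proof.
move=> jM.
case: (boolP ((a <= i) && (b <= j) && (i - a == j - b))%N) => h.
  have [h1 h2 h3] : [/\ (a <= i)%N, (b <= j)%N & (i - a = j - b)%N].
    by move: h => /andP[/andP[h1 h2] /eqP h3].
  have s0M : (i - a < M.+1)%N by lia.
  rewrite (bigD1 (Ordinal s0M)) // big1 ?addr0.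
    have e1 : (j == b + (i - a))%N by apply/eqP; lia.
    have e2 : (i == a + (i - a))%N by apply/eqP; lia.
    by rewrite /= e1 e2 addr0.
  move=> s /eqP ne; case: (boolP ((j == b + s) && (i == a + s))%N) => // /andP[/eqP e1 /eqP e2].
  by exfalso; apply: ne; apply: val_inj => /=; lia.
apply: big1 => s _; case: (boolP ((j == b + s) && (i == a + s))%N) => // /andP[/eqP e1 /eqP e2].
by move: h; rewrite e1 e2 !leq_addr /= !addKn eqxx.
Qed.

Lemma coef_fam (T : finType) (A : {pred T}) (al be : T -> nat) M j i : (j <= M)%N ->
  (((\sum_(F in A) mono (al F) (be F)) * Ssum M)`_j)`_i =
  \sum_(F in A) ((al F <= i) && (be F <= j) && (i - al F == j - be F))%N%:R.
Proof.
move=> jM; rewrite mulr_suml coef_sum coef_sum; apply: eq_bigr => F _.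
rewrite /Ssum mulr_sumr coef_sum coef_sum -(@ind_sum M (al F) (be F) i j jM).
by apply: eq_bigr => s _; rewrite monoM coef_mono.
Qed.

Lemma Q_coef (D Q : {poly {poly R}}) M j i : (j <= M)%N ->
  D = (1 - ('X%:P) * 'X) * Q -> (Q`_j)`_i = ((D * Ssum M)`_j)`_i.
Proof.
move=> jM ->.
have E : (1 - ('X%:P) * 'X) * Ssum M = 1 - mono M.+1 M.+1.
  rewrite /Ssum; have -> : mono M.+1 M.+1 = (('X%:P) * 'X) ^+ M.+1 by rewrite /mono exprMn.
  under eq_bigr => s _ do rewrite /mono -exprMn.
  by apply: oppr_inj; rewrite opprB subrX1 -mulNr opprB.
rewrite mulrAC mulrC E mulrBr mulr1 coefB /mono mulrA coefMXn ltnS jM.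
by rewrite subr0.
Qed.



Lemma sum_card (T : finType) (A : {pred T}) (P : pred T) :
  \sum_(F in A) (P F)%:R = (#|[set F in A | P F]|)%:R :> R.
Proof.
rewrite -natr_sum -sum1dep_card big_mkcondr /=; congr (_%:R).
Qed.

Lemma ind_eq n (E F : {set {set 'I_n}}) c k :
  (0 < n)%N -> (1 <= k)%N -> (n <= c + k)%N -> kappa E = 1%N ->
  simple_graph F ->
  ((rank E - rank F <= k.-1) && (corank F <= c + k - n) &&
    (k.-1 - (rank E - rank F) == (c + k - n) - corank F))%N =
  ((#|F| == c) && (kappa F <= k))%N.
Proof.
move=> n0 k1 nck kE sF.
have h1 := kappa_le F; have h2 := kappa_gt0 F n0; have h3 := kappa_ge sF.
rewrite /rank /corank kE.
move: h1 h2 h3; move: (kappa F) #|F| => a b h1 h2 h3.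
apply/idP/idP.
  by case/andP => /andP[x1 x2] /eqP x3; apply/andP; split; [apply/eqP|]; lia.
by case/andP => /eqP x1 x2; apply/andP; split; [apply/andP; split|apply/eqP]; lia.
Qed.

Lemma sumW n (E : {set {set 'I_n}}) c k :
  (0 < n)%N -> (1 <= k)%N -> (n <= c + k)%N -> simple_graph E -> connectedb E ->
  ((whitney R E * Ssum (c + k - n))`_(c + k - n))`_k.-1 = (Nik c k E)%:R.
Proof.
move=> n0 k1 nck sE cE.
rewrite /whitney (@coef_fam _ (powerset E) (fun F => (rank E - rank F)%N) (@corank n) (c + k - n) (c + k - n) k.-1 (leqnn _)).
rewrite -sum_card; apply: eq_bigr => F; rewrite inE => FE.
rewrite ind_eq //; first exact: kappa_conn.
exact: simple_sub FE sE.
Qed.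

Lemma N_mono n m (G H : {set {set 'I_n}}) c k : (0 < n)%N -> (1 <= k)%N ->
  inC m G -> inC m H ->
  (exists Q : {poly {poly R}}, nonneg_bipoly Q /\
     whitney R G - whitney R H = (1 - ('X%:P) * 'X) * Q) ->
  (Nik c k H <= Nik c k G)%N.
Proof.
move=> n0 k1 /and3P[sG _ cG] /and3P[sH _ cH] [Q [Qnn EQ]].
case: (ltnP (c + k) n) => nck.
  suff -> : Nik c k H = 0%N by [].
  apply/eqP; rewrite cards_eq0; apply/eqP/setP => F; rewrite !inE.
  apply/negbTE; apply/negP => /andP[FH /andP[/eqP Fc Fk]].
  have := kappa_ge (simple_sub FH sH); rewrite Fc.
  move: Fk; move: (kappa F) => a; lia.
have := Qnn (c + k - n)%N k.-1.
rewrite (Q_coef _ (leqnn _) EQ) mulrBl coefB coefB !sumW //.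
by rewrite subr_ge0 ler_nat.
Qed.
End P.


Lemma bigmin_le_seed (I : finType) (P : pred I) (f : I -> nat) s :
  (\big[minn/s]_(i | P i) f i <= s)%N.
Proof.
apply: (big_rec (fun v => v <= s)%N) => // i x _ h.
by rewrite geq_min h orbT.
Qed.

Lemma bigmin_le_term (I : finType) (P : pred I) (f : I -> nat) s j : P j ->
  (\big[minn/s]_(i | P i) f i <= f j)%N.
Proof.
move=> Pj; have : j \in index_enum I by rewrite mem_index_enum.
elim: (index_enum I) => [//|x r IH]; rewrite inE big_cons.
case/orP => [/eqP <-|jr]; first by rewrite Pj geq_minl.
by case: (P x); rewrite ?geq_min IH ?orbT.
Qed.

Lemma tkE n (E : {set {set 'I_n}}) k : simple_graph E -> (k <= n)%N ->
  tk k E = Nik (n - k) k E.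
Proof.
move=> sE kn; rewrite /tk /Nik.
suff -> : [set F in powerset E | forestb F && (kappa F == k)%N] =
  [set F in powerset E | (#|F| == n - k)%N && (kappa F <= k)%N] by [].
apply/setP => F; rewrite !inE.
case: (boolP (F \subset E)) => FE //=.
have sF := simple_sub FE sE.
rewrite forest_char //.
have h := kappa_ge sF; move: h; move: (kappa F) #|F| => a b h.
apply/idP/idP.
  by case/andP => /eqP x1 /eqP x2; apply/andP; split; [apply/eqP|]; lia.
by case/andP => /eqP x1 x2; apply/andP; split; apply/eqP; lia.
Qed.

End Aux.
Import Aux.
Local Open Scope ring_scope.

Theorem mainTheorem7 (R : realType) (n m : nat) (G : {set {set 'I_n}}) :
  inC m G -> whitney_max R m G ->
  (forall k : nat, (1 <= k <= n)%N ->
     forall H : {set {set 'I_n}}, inC m H ->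
     forall p : R, 0 <= p <= 1 -> kreliab k H p <= kreliab k G p) /\
  (forall k : nat, (1 <= k <= n.-1)%N ->
     forall H : {set {set 'I_n}}, inC m H -> (lambdak k H <= lambdak k G)%N) /\
  (forall k : nat, (1 <= k <= n)%N ->
     forall H : {set {set 'I_n}}, inC m H -> (tk k H <= tk k G)%N).
Proof.
move=> iG wm.
have NM : forall H : {set {set 'I_n}}, inC m H -> forall c k, (0 < n)%N -> (1 <= k)%N ->
    (Nik c k H <= Nik c k G)%N.
  by move=> H iH c k n0 k1; exact: (N_mono c n0 k1 iG iH (wm H iH)).
have [sG mG _] := and3P iG.
split; last split.
- move=> k /andP[k1 kn] H iH p /andP[p0 p1].
  have [sH mH _] := and3P iH.
  rewrite /kreliab (eqP mH) (eqP mG); apply: ler_sum => i _.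
  apply: ler_wpM2r; first by apply: exprn_ge0; rewrite subr_ge0.
  apply: ler_wpM2r; first exact: exprn_ge0.
  by rewrite ler_nat; apply: NM => //; lia.
- move=> k /andP[k1 kn] H iH.
  have [sH mH _] := and3P iH.
  have n0 : (0 < n)%N by lia.
  rewrite {2}/lambdak.
  apply: (big_ind (fun v => lambdak k H <= v)%N).
  + by rewrite /lambdak (eqP mG) -(eqP mH); apply: bigmin_le_seed.
  + by move=> x y hx hy; rewrite leq_min hx hy.
  move=> F /andP[]; rewrite inE => FG kF.
  set c := #|G :\: F|.
  pose A (E : {set {set 'I_n}}) := [set X in powerset E | #|X| == c].
  have AE : forall E, A E = [set X : {set {set 'I_n}} | X \subset E & #|X| == c].
    by move=> E; apply/setP => X; rewrite !inE.
  have cA : #|A H| = #|A G| by rewrite !AE !cards_draws (eqP mH) (eqP mG).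
  have NsubA : forall E, [set X in powerset E | (#|X| == c) && (kappa X <= k)%N] \subset A E.
    by move=> E; apply/subsetP => X; rewrite !inE => /andP[-> /andP[-> _]].
  have ltG : (Nik c k G < #|A G|)%N.
    apply: proper_card; rewrite properE NsubA /=; apply/subsetPn.
    exists (G :\: F); first by rewrite !inE subsetDl /=.
    by rewrite !inE subsetDl eqxx /= -ltnNge.
  have : ~~ (A H \subset [set X in powerset H | (#|X| == c) && (kappa X <= k)%N]).
    apply/negP => /subset_leq_card; rewrite cA -/(Nik c k H).
    by have := NM H iH c k n0 k1; lia.
  case/subsetPn => X; rewrite !inE => /andP[XH /eqP Xc].
  rewrite XH Xc eqxx /= -ltnNge => kX.
  have e1 : #|H :\: X| = (#|H| - #|X|)%N by rewrite cardsD (setIidPr XH).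
  have e2 : c = (#|G| - #|F|)%N by rewrite /c cardsD (setIidPr FG).
  have e3 := subset_leq_card FG.
  have -> : #|F| = #|H :\: X|.
    rewrite e1 Xc e2 (eqP mH); move: e3; rewrite (eqP mG); lia.
  apply: bigmin_le_term; rewrite inE subsetDl /=.
  by rewrite setDDr setDv set0U (setIidPr XH).
- move=> k /andP[k1 kn] H iH.
  have [sH mH _] := and3P iH.
  rewrite !tkE //; apply: NM => //; lia.
Qed.
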